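(* Let $M$ be a loopless matroid and let $F$ be a flat of $M$. If either the restriction $M|F$ or the contraction $M/F$ has a non-standard rank-preserving rainbow circuit-free coloring, then so does $M$.
   Context: A coloring of the ground set is a partition into nonempty color classes; it is rainbow circuit-free if no circuit has all its elements of pairwise different colors, and rank-preserving if the number of colors equals the rank of the matroid. A coloring of a rank-$r$ matroid $N$ with color classes $S_1,\dots,S_r$ is standard if, after possibly reindexing the classes, $S_i$ is a cut of the restriction $N|(S_1\cup\dots\cup S_i)$ for every $i=1,\dots,r$, where a cut is an inclusionwise minimal subset of the ground set intersecting every basis. A flat is a set $F$ with $r_M(F+e)>r_M(F)$ for all $e\notin F$. *)

(* Defs.v *)
From mathcomp Require Import all_boot.
Set Implicit Arguments. Unset Strict Implicit. Unset Printing Implicit Defensive.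

Section Matroids.
Variable T : finType.

Record setsys := SetSys { ground : {set T}; indep : {set T} -> bool }.

Definition is_matroid (M : setsys) : Prop :=
  [/\ indep M set0,
      (forall X : {set T}, indep M X -> X \subset ground M),
      (forall X Y : {set T}, Y \subset X -> indep M X -> indep M Y) &
      (forall X Y : {set T}, indep M X -> indep M Y -> #|X| < #|Y| ->
          exists2 y, y \in Y :\: X & indep M (y |: X))].

Definition rank (M : setsys) (A : {set T}) : nat :=
  \max_(X : {set T} | (X \subset A) && indep M X) #|X|.

Definition mrank (M : setsys) : nat := rank M (ground M).

Definition is_basis (M : setsys) (B : {set T}) : bool :=
  indep M B && [forall Y : {set T}, (indep M Y && (B \subset Y)) ==> (Y == B)].

Definition is_circuit (M : setsys) (C : {set T}) : bool :=
  [&& C \subset ground M, ~~ indep M C &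
      [forall D : {set T}, (D \proper C) ==> indep M D]].

Definition meets_all_bases (M : setsys) (D : {set T}) : bool :=
  [forall B : {set T}, is_basis M B ==> (D :&: B != set0)].

Definition is_cut (M : setsys) (D : {set T}) : bool :=
  [&& D \subset ground M, meets_all_bases M D &
      [forall D' : {set T}, (D' \proper D) ==> ~~ meets_all_bases M D']].

Definition loopless (M : setsys) : Prop :=
  forall e : T, e \in ground M -> indep M [set e].

Definition is_flat (M : setsys) (F : {set T}) : Prop :=
  F \subset ground M /\
  forall e : T, e \in ground M -> e \notin F -> rank M F < rank M (e |: F).

Definition restrict (M : setsys) (S : {set T}) : setsys :=
  SetSys S (fun X => (X \subset S) && indep M X).

Definition contract (M : setsys) (S : {set T}) : setsys :=
  SetSys (ground M :\: S)
    (fun X => (X \subset ground M :\: S) && (rank M (X :|: S) == #|X| + rank M S)).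

(* a coloring: a partition of the ground set into nonempty color classes *)
Definition is_coloring (M : setsys) (P : {set {set T}}) : bool :=
  partition P (ground M).

Definition rainbow (P : {set {set T}}) (C : {set T}) : bool :=
  [forall S in P, #|C :&: S| <= 1].

Definition rainbow_circuit_free (M : setsys) (P : {set {set T}}) : Prop :=
  forall C : {set T}, is_circuit M C -> ~~ rainbow P C.

Definition rank_preserving (M : setsys) (P : {set {set T}}) : Prop :=
  #|P| = mrank M.

Definition standard (M : setsys) (P : {set {set T}}) : Prop :=
  exists s : seq {set T},
    [/\ uniq s, [set S in s] = P &
        forall i, i < size s ->
          is_cut (restrict M (\bigcup_(j < i.+1) nth set0 s j)) (nth set0 s i)].

Definition has_nonstd_rp_rcf_coloring (M : setsys) : Prop :=
  exists P : {set {set T}},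
    [/\ is_coloring M P, rainbow_circuit_free M P, rank_preserving M P
        & ~ standard M P].

End Matroids.

(* Main.v *)
Require Import Defs.
From mathcomp Require Import all_boot.
From mathcomp Require Import zify.
Set Implicit Arguments. Unset Strict Implicit. Unset Printing Implicit Defensive.

Section R.
Implicit Types (T : finType).

Lemma rank_ub T (M : setsys T) (A X : {set T}) :
  X \subset A -> indep M X -> #|X| <= rank M A.
Proof.
move=> sXA iX; rewrite /rank.
apply: (@leq_bigmax_cond _ (fun X : {set T} => (X \subset A) && indep M X) (fun X : {set T} => #|X|) X).
by rewrite sXA iX.
Qed.

Lemma rank_wit T (M : setsys T) (A : {set T}) : is_matroid M ->
  exists2 X : {set T}, (X \subset A) && indep M X & #|X| = rank M A.
Proof.
case=> i0 _ _ _.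
have : 0 < #|[pred X : {set T} | (X \subset A) && indep M X]|.
  apply/card_gt0P; exists set0; by rewrite inE sub0set i0.
move/(eq_bigmax_cond (fun X : {set T} => #|X|)) => [X HX E].
exists X => //; rewrite /rank -E; apply: eq_bigl => Y; by rewrite inE.
Qed.
End R.

Section R2.
Implicit Types (T : finType).
Variables (T : finType) (M : setsys T).
Hypothesis HM : is_matroid M.

Lemma rank_mono (A B : {set T}) : A \subset B -> rank M A <= rank M B.
Proof.
move=> sAB; have [X /andP[sXA iX] <-] := rank_wit A HM.
apply: rank_ub => //; exact: subset_trans sAB.
Qed.

Lemma rank_card (A : {set T}) : rank M A <= #|A|.
Proof.
have [X /andP[sXA iX] <-] := rank_wit A HM; exact: subset_leq_card.
Qed.

Lemma indep_sub (X Y : {set T}) : Y \subset X -> indep M X -> indep M Y.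
Proof. by case: HM => _ _ H _; apply: H. Qed.

Lemma rank_indep (X : {set T}) : indep M X -> rank M X = #|X|.
Proof. move=> iX; apply/eqP; rewrite eqn_leq rank_card rank_ub //. Qed.

Lemma indep_rank (X : {set T}) : #|X| <= rank M X -> indep M X.
Proof.
move=> h; have [Y /andP[sYX iY] eY] := rank_wit X HM.
suff -> : X = Y by [].
apply/eqP; rewrite eq_sym eqEcard sYX; lia.
Qed.

Lemma rank_ext (J A : {set T}) : indep M J -> J \subset A ->
  exists I : {set T}, [/\ J \subset I, I \subset A, indep M I & #|I| = rank M A].
Proof.
move: {2}(rank M A - #|J|) (erefl (rank M A - #|J|)) => k.
elim: k J => [|k IH] J Hk iJ sJA.
  exists J; split => //; have := rank_ub sJA iJ; lia.
have [X /andP[sXA iX] eX] := rank_wit A HM.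
case: HM => _ _ _ aug.
have [y] := aug J X iJ iX ltac:(lia).
rewrite inE => /andP[yJ yX] iyJ.
have sJ' : y |: J \subset A by rewrite subUset sub1set (subsetP sXA).
have Hk' : rank M A - #|y |: J| = k by rewrite cardsU1 yJ; lia.
have [I [s1 s2 s3 s4]] := IH (y |: J) Hk' iyJ sJ'.
exists I; split => //; apply: subset_trans s1; exact: subsetUr.
Qed.

Lemma rank_submod (A B : {set T}) :
  rank M (A :|: B) + rank M (A :&: B) <= rank M A + rank M B.
Proof.
have [I /andP[sI iI] eI] := rank_wit (A :&: B) HM.
have [J [sIJ sJ iJ eJ]] := rank_ext iI (subset_trans sI (subset_trans (subsetIl A B) (subsetUl A B))).
have hA : #|J :&: A| <= rank M A by apply: rank_ub; [exact: subsetIr | apply: indep_sub iJ; exact: subsetIl].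
have hB : #|J :&: B| <= rank M B by apply: rank_ub; [exact: subsetIr | apply: indep_sub iJ; exact: subsetIl].
have hU : (J :&: A) :|: (J :&: B) = J by rewrite -setIUr; apply/setIidPl.
have hI : #|I| <= #|(J :&: A) :&: (J :&: B)|.
  apply: subset_leq_card; rewrite !subsetI sIJ.
  by move: sI; rewrite subsetI => /andP[-> ->].
have := cardsUI (J :&: A) (J :&: B); rewrite hU; lia.
Qed.

Lemma rank_unit (A : {set T}) (x : T) : rank M (x |: A) <= (rank M A).+1.
Proof.
have [I /andP[sI iI] <-] := rank_wit (x |: A) HM.
have h : #|I :\ x| <= rank M A.
  apply: rank_ub; last by apply: indep_sub iI; exact: subD1set.
  apply/subsetP => y; rewrite !inE => /andP[yx yI].
  by move: (subsetP sI y yI); rewrite !inE (negbTE yx).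
have := cardsD1 x I; case: (x \in I); lia.
Qed.

Lemma rank0 : rank M set0 = 0.
Proof. by have := rank_card set0; rewrite cards0; lia. Qed.

Lemma rank_dim (A B X : {set T}) : A \subset B ->
  rank M (B :|: X) + rank M A <= rank M B + rank M (A :|: X).
Proof.
move=> sAB.
have := rank_submod B (A :|: X).
have -> : B :|: (A :|: X) = B :|: X.
  by rewrite setUA; congr (_ :|: _); apply/setUidPl.
have : rank M A <= rank M (B :&: (A :|: X)).
  by apply: rank_mono; rewrite subsetI sAB subsetUl.
lia.
Qed.

End R2.

Section R3.
Variables (T : finType) (M : setsys T).
Hypothesis HM : is_matroid M.

Lemma indep_ground (X : {set T}) : indep M X -> X \subset ground M.
Proof. by case: HM => _ H _ _; apply: H. Qed.

Lemma clos_mono (A B : {set T}) (x : T) : A \subset B ->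
  rank M (x |: A) <= rank M A -> rank M (x |: B) <= rank M B.
Proof.
move=> sAB h; have := rank_dim HM [set x] sAB.
rewrite ![_ :|: [set x]]setUC; lia.
Qed.

Lemma basis_big (I : {set T}) : indep M I -> mrank M <= #|I| -> is_basis M I.
Proof.
move=> iI h; rewrite /is_basis iI /=; apply/forallP => Y; apply/implyP => /andP[iY sIY].
have := rank_ub (indep_ground iY) iY; rewrite -/(mrank M) => hY.
by rewrite eq_sym eqEcard sIY; lia.
Qed.

Lemma basis_card (B : {set T}) : is_basis M B -> mrank M <= #|B|.
Proof.
case/andP => iB /forallP mB.
have [I [s1 s2 s3 s4]] := rank_ext HM iB (indep_ground iB).
have := mB I; rewrite s3 s1 /= => /eqP <-; rewrite s4 //.
Qed.

Lemma cut_fwd (D : {set T}) : is_cut M D ->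
  [/\ D \subset ground M, rank M (ground M :\: D) < mrank M &
      forall x, x \in D -> mrank M <= rank M (x |: (ground M :\: D))].
Proof.
case/and3P => sD mD /forallP minD; split => //.
  rewrite ltnNge; apply/negP => h.
  have [I /andP[sI iI] eI] := rank_wit (ground M :\: D) HM.
  have bI : is_basis M I by apply: basis_big; rewrite // eI.
  move/forallP: mD => /(_ I); rewrite bI /= => /set0Pn [y]; rewrite inE => /andP[yD yI].
  by move: (subsetP sI y yI); rewrite inE yD.
move=> x xD.
have := minD (D :\ x); rewrite properD1 //= => /forallPn [B].
rewrite negb_imply negbK => /andP[bB /eqP dB].
apply: leq_trans (basis_card bB) _.
apply: rank_ub; last by case/andP: bB.
apply/subsetP => y yB; rewrite !inE.
have yG := subsetP (indep_ground (proj1 (andP bB))) y yB; rewrite yG andbT.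
case: (y =P x) => //= yx.
apply/negP => yD.
have : y \in (D :\ x) :&: B by rewrite !inE yD yB (introF eqP yx).
by rewrite dB inE.
Qed.

Lemma cut_bwd (D : {set T}) : D \subset ground M ->
  rank M (ground M :\: D) < mrank M ->
  (forall x, x \in D -> mrank M <= rank M (x |: (ground M :\: D))) ->
  is_cut M D.
Proof.
move=> sD lt hx; rewrite /is_cut sD /=; apply/andP; split.
  apply/forallP => B; apply/implyP => bB; apply/negP => /eqP dB.
  have := basis_card bB.
  have : #|B| <= rank M (ground M :\: D).
    apply: rank_ub; last by case/andP: bB.
    apply/subsetP => y yB; rewrite inE (subsetP (indep_ground (proj1 (andP bB))) y yB) andbT.
    apply/negP => yD; have : y \in D :&: B by rewrite inE yD yB.
    by rewrite dB inE.
  lia.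
apply/forallP => D'; apply/implyP => /properP [sD' [x xD xD']].
have [I /andP[sI iI] eI] := rank_wit (x |: (ground M :\: D)) HM.
apply/forallPn; exists I; rewrite negb_imply negbK basis_big //; last by rewrite eI hx.
rewrite /=; apply/eqP/setP => y; rewrite !inE.
apply/negP => /andP[yD' yI].
move: (subsetP sI y yI); rewrite !inE => /orP[/eqP yx|/andP[yD _]].
  by subst; rewrite yD' in xD'.
by rewrite (subsetP sD' y yD') in yD.
Qed.

End R3.

Section Restrict.
Variables (T : finType) (M : setsys T).
Hypothesis HM : is_matroid M.

Lemma restrict_matroid (G : {set T}) : is_matroid (restrict M G).
Proof.
case: HM => i0 ig isub iaug; split => /=.
- by rewrite sub0set i0.
- by move=> X /andP[].
- move=> X Y sYX /andP[sX iX]; rewrite (subset_trans sYX sX) /=; exact: isub iX.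
- move=> X Y /andP[sX iX] /andP[sY iY] lt.
  have [y yYX iy] := iaug X Y iX iY lt; exists y => //.
  rewrite iy andbT subUset sX andbT sub1set.
  by move: yYX; rewrite inE => /andP[_ /(subsetP sY)].
Qed.

Lemma rank_restrict (G A : {set T}) : rank (restrict M G) A = rank M (A :&: G).
Proof.
rewrite /rank; apply: eq_bigl => X /=; rewrite subsetI; case: (X \subset A) => //.
Qed.

End Restrict.

Section Contract.
Variables (T : finType) (M : setsys T).
Hypothesis HM : is_matroid M.

Lemma rank_Ule (A B : {set T}) : rank M (A :|: B) <= rank M A + #|B|.
Proof. have := rank_submod HM A B; have := rank_card HM B; lia. Qed.

Lemma clos_union (A Z : {set T}) :
  (forall y, y \in Z -> rank M (y |: A) <= rank M A) -> rank M (A :|: Z) <= rank M A.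
Proof.
move: {2}#|Z| (erefl #|Z|) => n; elim: n Z => [|n IH] Z hn hZ.
  by move/eqP: hn; rewrite cards_eq0 => /eqP ->; rewrite setU0.
have : 0 < #|Z| by rewrite hn.
case/card_gt0P => y yZ.
have h1 : rank M (A :|: Z :\ y) <= rank M A.
  apply: IH; first by rewrite (cardsD1 y Z) yZ in hn; lia.
  by move=> z; rewrite inE => /andP[_ /hZ].
have h2 : rank M (y |: (A :|: Z :\ y)) <= rank M (A :|: Z :\ y).
  apply: (clos_mono HM (A := A)); [exact: subsetUl | exact: hZ].
suff -> : A :|: Z = y |: (A :|: Z :\ y) by lia.
apply/setP => z; rewrite !inE; case: (z =P y) => [->|]; by rewrite ?yZ ?orbT.
Qed.

Variable F : {set T}.

Lemma contract_matroid : is_matroid (contract M F).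
Proof.
split => /=.
- by rewrite /= sub0set set0U cards0 add0n eqxx.
- by move=> X /andP[].
- move=> X Y sYX /andP[sX /eqP eX]; rewrite (subset_trans sYX sX) /=.
  have e1 : X :|: F = (Y :|: F) :|: (X :\: Y).
    apply/setP => z; rewrite !inE; move: (subsetP sYX z).
    by case: (z \in Y); case: (z \in X); case: (z \in F) => //= /(_ isT).
  have := rank_Ule (Y :|: F) (X :\: Y); rewrite -e1 eX.
  have := rank_Ule F Y; rewrite setUC.
  have := cardsD X Y; rewrite (setIidPr sYX).
  have := subset_leq_card sYX.
  move=> *; apply/eqP; lia.
- move=> X Y /andP[sX /eqP eX] /andP[sY /eqP eY] lt.
  case: (boolP [exists y in Y :\: X, indep (contract M F) (y |: X)]).
    by case/exists_inP => y yYX iy; exists y.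
  move/exists_inP => H; exfalso.
  have hc : forall y, y \in Y :\: X -> rank M (y |: (X :|: F)) <= rank M (X :|: F).
    move=> y yYX; move: (yYX); rewrite inE => /andP[yX yY].
    have s' : y |: X \subset ground M :\: F by rewrite subUset sub1set (subsetP sY) // sX.
    have : ~~ indep (contract M F) (y |: X) by apply/negP => h; apply: H; exists y.
    rewrite /= s' /= => ne.
    have := rank_Ule F (y |: X); rewrite setUC cardsU1 yX -setUA eX.
    move: ne; rewrite cardsU1 yX -setUA; move=> /eqP; lia.
  have := clos_union hc.
  have : rank M (Y :|: F) <= rank M (X :|: F :|: Y :\: X).
    apply: rank_mono => //; apply/subsetP => z; rewrite !inE.
    by case: (z \in X); case: (z \in Y); case: (z \in F).
  lia.
Qed.

Lemma rank_contract (A : {set T}) : F \subset ground M ->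
  rank (contract M F) A = rank M ((A :&: (ground M :\: F)) :|: F) - rank M F.
Proof.
move=> sF; set A' := A :&: (ground M :\: F).
apply/eqP; rewrite eqn_leq; apply/andP; split.
  have [X /andP[sXA /andP[sX /eqP eX]] <-] := rank_wit A contract_matroid.
  have : rank M (X :|: F) <= rank M (A' :|: F).
    by apply: (rank_mono HM); apply: setSU; rewrite subsetI sXA sX.
  lia.
have [I /andP[sI iI] eI] := rank_wit F HM.
have [J [sIJ sJ iJ eJ]] := rank_ext HM iI (subset_trans sI (subsetUr A' F)).
have h1 : #|J :&: F| <= rank M F.
  apply: rank_ub; [exact: subsetIr | apply: indep_sub iJ => //; exact: subsetIl].
have h2 : #|I| <= #|J :&: F| by apply: subset_leq_card; rewrite subsetI sIJ.
have h3 := cardsD J F.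
have sXA' : J :\: F \subset A'.
  apply/subsetP => z; rewrite inE => /andP[zF zJ].
  by move: (subsetP sJ z zJ); rewrite inE (negbTE zF) orbF.
have h4 : #|J| <= rank M ((J :\: F) :|: F).
  apply: rank_ub => //; apply/subsetP => z zJ; rewrite !inE zJ; by case: (z \in F).
have h5 := rank_Ule F (J :\: F); rewrite setUC in h5.
have : #|J :\: F| <= rank (contract M F) A.
  apply: rank_ub; first by apply: subset_trans sXA' _; exact: subsetIl.
  rewrite /= (subset_trans sXA' (subsetIr _ _)) /=; apply/eqP; have := subset_leq_card (subsetIl J F); lia.
lia.
Qed.

End Contract.

Lemma dep_circuit (T : finType) (N : setsys T) (X : {set T}) :
  X \subset ground N -> ~~ indep N X -> exists2 C : {set T}, C \subset X & is_circuit N C.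
Proof.
move: {2}#|X| (leqnn #|X|) => n; elim: n X => [|n IH] X hn sX dX.
  case: (boolP [forall D : {set T}, (D \proper X) ==> indep N D]) => h.
    by exists X => //; rewrite /is_circuit sX dX.
  case/forallPn: h => D; rewrite negb_imply => /andP[/proper_card]; lia.
case: (boolP [forall D : {set T}, (D \proper X) ==> indep N D]) => h.
  by exists X => //; rewrite /is_circuit sX dX.
case/forallPn: h => D; rewrite negb_imply => /andP[pD dD].
have [|||C sC cC] := IH D.
- have := proper_card pD; lia.
- exact: subset_trans (proper_sub pD) sX.
- exact: dD.
exists C => //; exact: subset_trans sC (proper_sub pD).
Qed.

Lemma circuit_restrict (T : finType) (N : setsys T) (H C : {set T}) :
  is_circuit N C -> C \subset H -> is_circuit (restrict N H) C.
Proof.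
case/and3P => _ dC /forallP mC sCH; rewrite /is_circuit /= sCH /= dC /=.
apply/forallP => D; apply/implyP => pD.
by rewrite (subset_trans (proper_sub pD) sCH) /=; move/implyP: (mC D); apply.
Qed.

Lemma rainbow_sub (T : finType) (P P' : {set {set T}}) (C : {set T}) :
  P' \subset P -> ~~ rainbow P' C -> ~~ rainbow P C.
Proof.
move=> sP; apply: contra => /forall_inP h; apply/forall_inP => S SP'.
apply: h; exact: (subsetP sP).
Qed.

Lemma exists_coloring (T : finType) n (N : setsys T) : #|ground N| <= n ->
  is_matroid N -> loopless N ->
  exists P, [/\ is_coloring N P, rainbow_circuit_free N P & rank_preserving N P].
Proof.
elim: n N => [|n IH] N hn HN lN.
  have E0 : ground N = set0 by apply/eqP; rewrite -cards_eq0; lia.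
  exists set0; split.
  - by rewrite /is_coloring E0 partition_set0.
  - move=> C /and3P[sC dC _]; exfalso.
    move: sC; rewrite E0 subset0 => /eqP C0; subst C.
    by case: HN => i0 _ _ _; rewrite i0 in dC.
  - rewrite /rank_preserving cards0 /mrank E0.
    by have := rank_card HN set0; rewrite cards0; lia.
have [B /andP[sB iB] eB] := rank_wit (ground N) HN.
case: (posnP #|B|) => [B0|Bpos].
  have E0 : ground N = set0.
    apply/eqP; rewrite -subset0; apply/subsetP => e eE.
    have := rank_ub (A := ground N) (X := [set e]) _ (lN e eE).
    by rewrite sub1set eE cards1 -/(mrank N) /mrank -eB B0 => /(_ isT).
  exists set0; split.
  - by rewrite /is_coloring E0 partition_set0.
  - move=> C /and3P[sC dC _]; exfalso.
    move: sC; rewrite E0 subset0 => /eqP C0; subst C.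
    by case: HN => i0 _ _ _; rewrite i0 in dC.
  - by rewrite /rank_preserving cards0 /mrank -eB B0.
case/card_gt0P: Bpos => b bB.
set B' := B :\ b.
set E := ground N.
set H := [set e in E | rank N (e |: B') <= rank N B'].
have iB' : indep N B' by apply: indep_sub iB => //; exact: subD1set.
have rB' : rank N B' = #|B| - 1 by rewrite rank_indep // /B' (cardsD1 b B) bB /=; lia.
have bE : b \in E := subsetP sB b bB.
have sHE : H \subset E by apply/subsetP => e; rewrite inE => /andP[].
have bH : b \notin H.
  rewrite inE bE /= -ltnNge setD1K // (rank_indep HN iB) rB'.
  have := cardsD1 b B; rewrite bB /=; lia.
have sB'H : B' \subset H.
  apply/subsetP => y yB'; rewrite inE (subsetP sB) ?(subsetP (subD1set B b)) //=.
  by rewrite (setUidPr _) // sub1set.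
have rH : rank N H = rank N B'.
  apply/eqP; rewrite eqn_leq (rank_mono HN sB'H) andbT.
  have := clos_union HN (A := B') (Z := H).
  have := rank_mono HN (subsetUr B' H).
  move=> h1 h2; apply: leq_trans h1 (h2 _).
  by move=> y; rewrite inE => /andP[].
have hflat : forall e, e \in E -> e \notin H -> rank N H < rank N (e |: H).
  move=> e eE eH; rewrite ltnNge; apply/negP => h.
  move: eH; rewrite inE eE /=; apply/negP/negPn.
  apply: leq_trans (rank_mono HN (setUS _ sB'H)) _; lia.
have HN' := restrict_matroid HN H.
have lN' : loopless (restrict N H).
  move=> e /= eH; rewrite sub1set eH /=; apply: lN; exact: (subsetP sHE).
have hn' : #|ground (restrict N H)| <= n.
  rewrite /=; have : #|H| < #|E| by apply: proper_card; rewrite properE sHE; apply/subsetPn; exists b.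
  move: hn; rewrite -/E; lia.
have [P' [cP' rcfP' rpP']] := IH _ hn' HN' lN'.
have EH0 : E :\: H != set0 by apply/set0Pn; exists b; rewrite inE bH.
have EHP' : E :\: H \notin P'.
  apply/negP => h; have := partitionS cP' h => /= s.
  case/set0Pn: EH0 => z zEH; have := subsetP s z zEH.
  by move: zEH; rewrite inE => /andP[/negP zH _] /zH.
exists ((E :\: H) |: P'); split.
- rewrite /is_coloring.
  have eE : (E :\: H) :|: H = E.
    apply/setP => z; rewrite in_setU in_setD; case hz: (z \in H) => /=; first by rewrite ?orbT (subsetP sHE z hz).
    by rewrite ?orbF ?andbT.
  have hd : [disjoint E :\: H & H].
    by rewrite disjoint_sym disjoints_subset; apply/subsetP => z zH; rewrite in_setC in_setD zH.
  have := partitionU1 cP' EH0 hd; rewrite eE; exact.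
- move=> C cC; case: (boolP (C \subset H)) => sCH.
    apply: (rainbow_sub (P' := P')); first exact: subsetUr.
    by apply: rcfP'; apply: circuit_restrict.
  case/subsetPn: sCH => e eC eH.
  case/and3P: (cC) => sC dC /forallP mC.
  have eE : e \in E := subsetP sC e eC.
  apply/negP => /forall_inP /(_ (E :\: H)) => /(_ (setU11 _ _)) h1.
  have sCe : C :\ e \subset H.
    apply/subsetP => y; rewrite in_setD1 => /andP[ye yC].
    apply/negPn/negP => yH.
    have : [set e; y] \subset C :&: (E :\: H).
      rewrite subUset !sub1set !in_setI !in_setD eC eH yC yH (subsetP sC y yC) eE //.
    move/subset_leq_card; rewrite cards2 eq_sym ye /= => h; by have := leq_trans h h1.
  have iCe : indep N (C :\ e) by move/implyP: (mC (C :\ e)); apply; rewrite properD1.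
  have rC : rank N C < #|C|.
    rewrite ltnNge; apply/negP => h; by rewrite (indep_rank HN h) in dC.
  have h2 : rank N (e |: (C :\ e)) <= rank N (C :\ e).
    rewrite setD1K // (rank_indep HN iCe); move: rC; rewrite (cardsD1 e C) eC /= add1n ltnS; exact.
  have h3 := clos_mono HN sCe h2.
  by have := leq_trans (hflat e eE eH) h3; rewrite ltnn.
- rewrite /rank_preserving cardsU1 EHP' rpP' /mrank /= rank_restrict setIid rH rB'.
  rewrite /mrank -eB; have : 0 < #|B| by apply/card_gt0P; exists b.
  move: #|B| => k; clear; lia.
Qed.

Lemma bigcup_take (T : finType) (s : seq {set T}) n :
  \bigcup_(j < n) nth set0 s j = \bigcup_(X <- take n s) X.
Proof.
elim: n => [|n IH]; first by rewrite big_ord0 take0 big_nil.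
rewrite big_ord_recr /= IH.
case: (ltnP n (size s)) => hn.
  by rewrite (take_nth set0 hn) big_rcons.
by rewrite nth_default // !take_oversize ?setU0 //; apply: leqW.
Qed.

Lemma mem_bigcup_seq (T : finType) (s : seq {set T}) x :
  (x \in \bigcup_(X <- s) X) = has (fun X : {set T} => x \in X) s.
Proof. by elim: s => [|X s IH]; rewrite ?big_nil ?inE // big_cons in_setU IH. Qed.

Definition cutcond (T : finType) (M : setsys T) (s : seq {set T}) :=
  forall s1 S s2, s = s1 ++ S :: s2 ->
    is_cut (restrict M ((\bigcup_(X <- s1) X) :|: S)) S.

Lemma std_split (T : finType) (M : setsys T) P : standard M P ->
  exists s, [/\ uniq s, [set S in s] = P & cutcond M s].
Proof.
case=> s [us sP hc]; exists s; split => // s1 S s2 es.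
have hi : size s1 < size s by rewrite es size_cat /= addnS ltnS leq_addr.
have := hc _ hi.
have -> : nth set0 s (size s1) = S by rewrite es nth_cat ltnn subnn.
rewrite bigcup_take es take_cat ltnNge leqnSn /= subSn // subnn /= take0.
by rewrite cats1 big_rcons.
Qed.

Lemma split_std (T : finType) (M : setsys T) P s :
  uniq s -> [set S in s] = P -> cutcond M s -> standard M P.
Proof.
move=> us sP hc; exists s; split => // i hi.
rewrite bigcup_take (take_nth set0 hi) big_rcons.
apply: hc; rewrite -{1}(cat_take_drop i s) (drop_nth set0 hi) //.
Qed.

Lemma filter_split (T : eqType) (p : pred T) (s s1' s2' : seq T) (S : T) :
  [seq X <- s | p X] = s1' ++ S :: s2' ->
  exists s1 s2, [/\ s = s1 ++ S :: s2, [seq X <- s1 | p X] = s1' & p S].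
Proof.
elim: s s1' => [|X s IH] s1' /=; first by case: s1'.
case pX: (p X).
  case: s1' => [|Y s1'] /= [e1 e2].
    by subst; exists [::], s.
  subst Y; have [s1 [s2 [-> e3 pS]]] := IH _ e2.
  by exists (X :: s1), s2; rewrite /= pX e3.
move=> e; have [s1 [s2 [-> e3 pS]]] := IH _ e.
by exists (X :: s1), s2; rewrite /= pX e3.
Qed.

Lemma rainbow_subset (T : finType) (P : {set {set T}}) (C C' : {set T}) :
  C' \subset C -> rainbow P C -> rainbow P C'.
Proof.
move=> s /forall_inP h; apply/forall_inP => S SP.
apply: leq_trans (h S SP); apply: subset_leq_card; exact: setSI.
Qed.

Lemma dep_rank (T : finType) (M : setsys T) (X : {set T}) : is_matroid M ->
  ~~ indep M X -> rank M X < #|X|.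
Proof.
move=> HM dX; rewrite ltnNge; apply/negP => h; by rewrite (indep_rank HM h) in dX.
Qed.

Section Union.
Variables (T : finType) (M : setsys T) (F : {set T}) (P Q : {set {set T}}).
Hypothesis HM : is_matroid M.
Hypothesis sF : F \subset ground M.
Hypothesis cP : partition P F.
Hypothesis cQ : partition Q (ground M :\: F).

Lemma sub_P S : S \in P -> S \subset F.
Proof. exact: partitionS cP. Qed.

Lemma disj_Q S : S \in Q -> [disjoint S & F].
Proof.
move=> SQ; have := partitionS cQ SQ => s.
rewrite disjoints_subset; apply: subset_trans s _; apply/subsetP => z; rewrite !inE.
by case/andP.
Qed.

Lemma PQ0 : P :&: Q = set0.
Proof.
apply/setP => S; rewrite inE in_set0; apply/negP => /andP[SP SQ].
have := partition_neq0 cP SP; case/set0Pn => z zS.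
by have := disjointFr (disj_Q SQ) zS; rewrite (subsetP (sub_P SP) z zS).
Qed.

Lemma U_coloring : partition (P :|: Q) (ground M).
Proof.
case/and3P: cP => /eqP cvP tP nP; case/and3P: cQ => /eqP cvQ tQ nQ.
apply/and3P; split.
- rewrite /cover bigcup_setU -/(cover P) -/(cover Q) cvP cvQ.
  apply/eqP/setP => z; rewrite !inE; case zF: (z \in F) => /=; [by rewrite (subsetP sF z zF) | by rewrite ?andbT].
- rewrite setUC; apply: trivIsetU => //; rewrite cvP cvQ.
  by rewrite disjoints_subset; apply/subsetP => z; rewrite !inE => /andP[-> _].
- by rewrite inE negb_or nP nQ.
Qed.

Lemma U_card : #|P :|: Q| = #|P| + #|Q|.
Proof. by rewrite cardsU PQ0 cards0 subn0. Qed.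

Lemma dep_contract (C : {set T}) : is_circuit M C -> ~~ (C \subset F) ->
  ~~ indep (contract M F) (C :\: F).
Proof.
case/and3P => sC dC /forallP mC nCF; apply/negP => /= /andP[_ /eqP e].
have iCF : indep M (C :&: F).
  move/implyP: (mC (C :&: F)); apply; rewrite properEneq subsetIl andbT.
  apply/negP => /eqP h; move: nCF; by rewrite -h subsetIr.
have [I [s1 s2 s3 s4]] := rank_ext HM iCF (subsetIr C F).
have sC' : C \subset (C :\: F) :|: I.
  apply/subsetP => z zC; rewrite !inE zC andbT.
  case zF: (z \in F) => //=; apply: (subsetP s1); by rewrite inE zC zF.
have dCI : ~~ indep M ((C :\: F) :|: I).
  apply/negP => h; by rewrite (indep_sub HM sC' h) in dC.
have h1 := dep_rank HM dCI.
have h2 : #|(C :\: F) :|: I| <= #|C :\: F| + #|I|.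
  by rewrite cardsU; apply: leq_subr.
have h3 := rank_dim HM (C :\: F) s2.
rewrite (rank_indep HM s3) s4 in h3.
rewrite setUC e in h3; rewrite setUC in h1.
rewrite setUC in h2; lia.
Qed.

Lemma U_rcf : rainbow_circuit_free (restrict M F) P ->
  rainbow_circuit_free (contract M F) Q -> rainbow_circuit_free M (P :|: Q).
Proof.
move=> rP rQ C cC; case: (boolP (C \subset F)) => sCF.
  apply: (rainbow_sub (P' := P)); first exact: subsetUl.
  by apply: rP; apply: circuit_restrict.
have sC : C :\: F \subset ground (contract M F).
  rewrite /=; apply: setSD; by case/and3P: cC.
have [C' sC' cC'] := dep_circuit sC (dep_contract cC sCF).
apply: (rainbow_sub (P' := Q)); first exact: subsetUr.
apply: contra (rQ C' cC'); apply: rainbow_subset.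
apply: subset_trans sC' _; exact: subsetDl.
Qed.

End Union.

Lemma setUD_disj (T : finType) (H S : {set T}) : [disjoint H & S] -> (H :|: S) :\: S = H.
Proof.
move=> d; apply/setP => z; rewrite !inE; case zS: (z \in S); rewrite /= ?orbF ?andbT //.
by apply/esym/negbTE; apply/negP => zH; rewrite (disjointFr d zH) in zS.
Qed.

Section Seqs.
Variables (T : finType) (M : setsys T) (F : {set T}) (P Q : {set {set T}}).
Hypothesis HM : is_matroid M.
Hypothesis sF : F \subset ground M.
Hypothesis cP : partition P F.
Hypothesis cQ : partition Q (ground M :\: F).
Variable s : seq {set T}.
Hypothesis us : uniq s.
Hypothesis sU : [set S in s] = P :|: Q.
Hypothesis hc : cutcond M s.

Lemma inU X : X \in s -> X \in P :|: Q.
Proof. by rewrite -sU inE. Qed.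

Lemma cU : partition (P :|: Q) (ground M).
Proof. exact: (U_coloring sF cP cQ). Qed.

Lemma bigcup_all : \bigcup_(X <- s) X = ground M.
Proof.
have := cover_partition cU; rewrite /cover => <-.
rewrite big_uniq //; apply: eq_bigl => X; by rewrite -sU inE.
Qed.

Lemma split_facts s1 S s2 : s = s1 ++ S :: s2 ->
  [/\ S \in P :|: Q, S != set0, [disjoint \bigcup_(X <- s1) X & S] &
      \bigcup_(X <- s1) X \subset ground M].
Proof.
move=> e.
have SU : S \in P :|: Q by apply: inU; rewrite e mem_cat inE eqxx orbT.
split => //.
- exact: partition_neq0 cU SU.
- rewrite -setI_eq0; apply/eqP/setP => z; rewrite inE in_set0.
  apply/negP => /andP[]; rewrite mem_bigcup_seq => /hasP [X Xs1 zX] zS.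
  have XU : X \in P :|: Q by apply: inU; rewrite e mem_cat Xs1.
  have XS : X != S.
    apply/negP => /eqP XS; subst X.
    by move: us; rewrite e cat_uniq => /and3P[_ /negP h _]; apply: h; rewrite /= Xs1.
  have := trivIsetP (partition_trivIset cU) X S XU SU XS.
  by move/disjointFr => /(_ z zX); rewrite zS.
- apply/subsetP => z; rewrite mem_bigcup_seq => /hasP [X Xs1 zX].
  have XU : X \in P :|: Q by apply: inU; rewrite e mem_cat Xs1.
  exact: (subsetP (partitionS cU XU)).
Qed.

Lemma U_step s1 S s2 : s = s1 ++ S :: s2 ->
  rank M (\bigcup_(X <- s1) X) < rank M ((\bigcup_(X <- s1) X) :|: S) /\
  forall x, x \in S -> rank M ((\bigcup_(X <- s1) X) :|: S) <= rank M (x |: \bigcup_(X <- s1) X).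
Proof.
move=> e; have [SU S0 dHS sH] := split_facts e.
have [_ h1 h2] := cut_fwd (restrict_matroid HM _) (hc e).
move: h1 h2; rewrite /mrank /= !rank_restrict setIid setUD_disj //.
rewrite (setIidPl (subsetUl _ _)) => h1 h2; split => // x xS.
have := h2 x xS; rewrite rank_restrict (setIidPl _) //.
by rewrite subUset sub1set inE xS orbT subsetUl.
Qed.

Lemma count_card (R : {set {set T}}) : R \subset P :|: Q ->
  count (mem R) s = #|R|.
Proof.
move=> sR; rewrite -size_filter.
have u := filter_uniq (mem R) us.
rewrite -(card_uniqP u); apply: eq_card => X.
rewrite mem_filter /=; case XR: (X \in R) => //=.
by rewrite -[X \in s](@in_set _ (mem s)) sU (subsetP sR X XR).
Qed.


Definition gP t := rank M ((\bigcup_(X <- t) X) :&: F).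

Lemma P_strict s1 S s2 x : s = s1 ++ S :: s2 -> S \in P -> x \in S ->
  rank M ((\bigcup_(X <- s1) X) :&: F) < rank M (x |: ((\bigcup_(X <- s1) X) :&: F)).
Proof.
move=> e SP xS; have [h1 h2] := U_step e.
rewrite ltnNge; apply/negP => h.
have := clos_mono HM (subsetIl _ F) h.
have := h2 x xS; lia.
Qed.

Lemma gP_count b a c : s = a ++ b ++ c -> gP a + count (mem P) b <= gP (a ++ b).
Proof.
elim: b a => [|S b IH] a e; first by rewrite cats0 addn0.
have e' : s = rcons a S ++ b ++ c by rewrite cat_rcons.
have := IH _ e'; rewrite cat_rcons => h; apply: leq_trans h.
rewrite /= addnA leq_add2r.
have e2 : s = a ++ S :: (b ++ c) by [].
have [SU S0 _ _] := split_facts e2.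
rewrite /gP big_rcons /=.
case SP: (S \in P) => /=.
  case/set0Pn: S0 => x xS.
  rewrite addn1; apply: leq_trans (P_strict e2 SP xS) _.
  apply: (rank_mono HM); rewrite subUset sub1set !inE xS orbT (subsetP (sub_P cP SP) x xS) /=.
  by apply: setSI; apply: subsetUl.
rewrite addn0; apply: (rank_mono HM); by apply: setSI; apply: subsetUl.
Qed.

Hypothesis rpP : #|P| = rank M F.

Lemma P_cutcond : cutcond (restrict M F) [seq X <- s | X \in P].
Proof.
move=> s1' S s2' e'.
have [s1 [s2 [e es1 SP]]] := filter_split e'.
have [SU S0 dHS sH] := split_facts e.
set H := \bigcup_(X <- s1) X.
have sSF := sub_P cP SP.
have eH : \bigcup_(X <- s1') X = H :&: F.
  rewrite -es1 /H; have : all (fun X => X \in P :|: Q) s1.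
    apply/allP => X Xs1; apply: inU; by rewrite e mem_cat Xs1.
  elim: s1 {e es1 dHS sH H} => [|X t IH]; first by rewrite !big_nil set0I.
  move=> /= /andP[XU /IH {}IH]; rewrite big_cons /=; case XP: (X \in P).
    by rewrite big_cons IH setIUl (setIidPl (sub_P cP XP)).
  rewrite IH setIUl.
  have XQ : X \in Q by move: XU; rewrite inE XP.
  by rewrite (disjoint_setI0 (disj_Q cQ XQ)) set0U.
rewrite eH.
set K := (H :&: F) :|: S.
have sKF : K \subset F by rewrite subUset sSF andbT; exact: subsetIr.
have rK : forall A : {set T}, A \subset K -> rank (restrict (restrict M F) K) A = rank M A.
  move=> A sA; rewrite !rank_restrict (setIidPl sA) (setIidPl (subset_trans sA sKF)) //.
have dHFS : [disjoint H :&: F & S].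
  apply: disjointWl dHS; exact: subsetIl.
have eKS : K :\: S = H :&: F by rewrite /K setUD_disj.
have hb : rank M K <= (rank M (H :&: F)).+1.
  rewrite leqNgt; apply/negP => hlt.
  have c1 := gP_count (a := [::]) (b := s1) (c := S :: s2) e.
  have c2 : gP (rcons s1 S) + count (mem P) s2 <= gP s.
    have := gP_count (a := rcons s1 S) (b := s2) (c := [::]).
    by rewrite cats0 cat_rcons -e => /(_ erefl).
  rewrite /gP big_nil set0I (rank0 HM) /= in c1.
  rewrite /gP bigcup_all (setIidPr sF) big_rcons /= setIUl (setIidPl sSF) -/H in c2.
  have cs := count_card (subsetUl P Q).
  rewrite e count_cat /= SP rpP in cs.
  have cs2 : count (mem P) s1 + (count (mem P) s2).+1 = rank M F by exact: cs.
  have c1p : count (mem P) s1 <= rank M (H :&: F) by exact: c1.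
  have c2p : rank M (H :&: F :|: S) + count (mem P) s2 <= rank M F by exact: c2.
  have hltp : (rank M (H :&: F)).+1 < rank M (H :&: F :|: S) by exact: hlt.
  move: c1p c2p hltp cs2; clear; lia.
apply: (cut_bwd (restrict_matroid (restrict_matroid HM F) K)).
- by rewrite /= subsetUr.
- rewrite /mrank /= eKS !rK ?subsetUl //.
  case/set0Pn: S0 => x xS.
  apply: leq_trans (P_strict e SP xS) _.
  apply: (rank_mono HM); by rewrite /K subUset sub1set in_setU xS orbT subsetUl.
- move=> x xS; rewrite /mrank /= eKS !rK //.
    apply: leq_trans hb _; exact: P_strict e SP xS.
  by rewrite /K subUset sub1set in_setU xS orbT subsetUl.
Qed.


Definition gQ t := rank M ((\bigcup_(X <- t) X) :|: F).

Lemma E1 (H : {set T}) : (H :\: F) :|: F = H :|: F.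
Proof. apply/setP => z; rewrite !inE; by case: (z \in H); case: (z \in F). Qed.
Lemma E2 (H S : {set T}) : ((H :\: F) :|: S) :|: F = (H :|: S) :|: F.
Proof. apply/setP => z; rewrite !inE; by case: (z \in H); case: (z \in F); case: (z \in S). Qed.
Lemma E3 (H : {set T}) x : (x |: (H :\: F)) :|: F = x |: (H :|: F).
Proof. apply/setP => z; rewrite !inE; by case: (z == x); case: (z \in H); case: (z \in F). Qed.
Lemma E4 (H S : {set T}) x : x \in S -> (x |: H) :|: S = H :|: S.
Proof.
move=> xS; apply/setP => z; rewrite !inE; case: (z =P x) => [->|_] /=; first by rewrite xS orbT.
done.
Qed.
Lemma E5 (H S : {set T}) x : x \in S -> (x |: (H :|: F)) :|: S = (H :|: S) :|: F.
Proof.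
move=> xS; apply/setP => z; rewrite !inE; case: (z =P x) => [->|_] /=; first by rewrite xS !orbT.
by case: (z \in H); case: (z \in F); case: (z \in S).
Qed.

Lemma Q_bound s1 S s2 x : s = s1 ++ S :: s2 -> x \in S ->
  rank M (((\bigcup_(X <- s1) X) :|: S) :|: F) <= rank M (x |: ((\bigcup_(X <- s1) X) :|: F)).
Proof.
move=> e xS; have [h1 h2] := U_step e.
set H := \bigcup_(X <- s1) X in h1 h2 *.
have sub : x |: H \subset x |: (H :|: F) by apply: setUS; exact: subsetUl.
have := rank_dim HM S sub; rewrite E5 // E4 //.
have := h2 x xS; lia.
Qed.

Lemma gQ_count b a c : s = a ++ b ++ c -> gQ (a ++ b) <= gQ a + count (mem Q) b.
Proof.
elim: b a => [|S b IH] a e; first by rewrite cats0 addn0.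
have e' : s = rcons a S ++ b ++ c by rewrite cat_rcons.
have := IH _ e'; rewrite cat_rcons => h; apply: leq_trans h _.
rewrite /= addnA leq_add2r.
have e2 : s = a ++ S :: (b ++ c) by [].
have [SU S0 _ _] := split_facts e2.
rewrite /gQ big_rcons /=.
case SQ: (S \in Q) => /=.
  case/set0Pn: S0 => x xS.
  rewrite addn1; apply: leq_trans (Q_bound e2 xS) _; exact: rank_unit.
have SP : S \in P by move: SU; rewrite inE SQ orbF.
by rewrite addn0 -setUA (setUidPr (sub_P cP SP)).
Qed.

Hypothesis rpQ : #|Q| = rank M (ground M) - rank M F.

Lemma Q_cutcond : cutcond (contract M F) [seq X <- s | X \in Q].
Proof.
move=> s1' S s2' e'.
have [s1 [s2 [e es1 SQ]]] := filter_split e'.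
have [SU S0 dHS sH] := split_facts e.
set H := \bigcup_(X <- s1) X.
have sSE := partitionS cQ SQ.
have eH : \bigcup_(X <- s1') X = H :\: F.
  rewrite -es1 /H; have : all (fun X => X \in P :|: Q) s1.
    apply/allP => X Xs1; apply: inU; by rewrite e mem_cat Xs1.
  elim: s1 {e es1 dHS sH H} => [|X t IH]; first by rewrite !big_nil set0D.
  move=> /= /andP[XU /IH {}IH]; rewrite big_cons /=; case XQ: (X \in Q).
    by rewrite big_cons IH setDUl (setDidPl (disj_Q cQ XQ)).
  rewrite IH setDUl.
  have XP : X \in P by move: XU; rewrite inE XQ orbF.
  have : X :\: F == set0 by rewrite setD_eq0 (sub_P cP XP).
  by move/eqP ->; rewrite set0U.
rewrite eH.
set K := (H :\: F) :|: S.
have sKE : K \subset ground M :\: F by rewrite subUset sSE andbT; apply: setSD.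
have rK : forall A : {set T}, A \subset K ->
    rank (restrict (contract M F) K) A = rank M (A :|: F) - rank M F.
  move=> A sA; rewrite rank_restrict (setIidPl sA) (rank_contract HM _ sF).
  by rewrite (setIidPl (subset_trans sA sKE)).
have dHFS : [disjoint H :\: F & S] by apply: disjointWl dHS; exact: subsetDl.
have eKS : K :\: S = H :\: F by rewrite /K setUD_disj.
have rFE : rank M F <= rank M (ground M) := rank_mono HM sF.
have hs : rank M (H :|: F) < rank M ((H :|: S) :|: F).
  rewrite ltnNge; apply/negP => hle.
  have c1 := gQ_count (a := [::]) (b := s1) (c := S :: s2) e.
  have c2 : gQ s <= gQ (rcons s1 S) + count (mem Q) s2.
    have := gQ_count (a := rcons s1 S) (b := s2) (c := [::]).
    by rewrite cats0 cat_rcons -e => /(_ erefl).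
  rewrite /gQ big_nil set0U /= in c1.
  rewrite /gQ bigcup_all (setUidPl sF) big_rcons /= -/H in c2.
  have cs := count_card (subsetUr P Q).
  rewrite e count_cat /= SQ rpQ in cs.
  have cs2 : count (mem Q) s1 + (count (mem Q) s2).+1 = rank M (ground M) - rank M F by exact: cs.
  have c1p : rank M (H :|: F) <= rank M F + count (mem Q) s1 by exact: c1.
  have c2p : rank M (ground M) <= rank M (H :|: S :|: F) + count (mem Q) s2 by exact: c2.
  move: c1p c2p hle cs2 rFE; clear; lia.
have rHF : rank M F <= rank M (H :|: F) by apply: (rank_mono HM); exact: subsetUr.
apply: (cut_bwd (restrict_matroid (contract_matroid HM F) K)).
- by rewrite /= subsetUr.
- rewrite /mrank /= eKS !rK ?subsetUl // E1 E2; lia.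
- move=> x xS; rewrite /mrank /= eKS !rK //.
    rewrite E2 E3; apply: leq_sub2r; exact: Q_bound e xS.
  by rewrite /K subUset sub1set in_setU xS orbT subsetUl.
Qed.

End Seqs.

Lemma filter_set (T : finType) (P Q : {set {set T}}) (R : {set {set T}}) (s : seq {set T}) :
  [set S in s] = P :|: Q -> R \subset P :|: Q -> [set S in [seq X <- s | X \in R]] = R.
Proof.
move=> sU sR; apply/setP => X; rewrite inE mem_filter; case XR: (X \in R) => //=.
by rewrite -[X \in s](@in_set _ (mem s)) sU (subsetP sR X XR).
Qed.

Unset Implicit Arguments.
Theorem lemma15 (T : finType) (M : setsys T) (F : {set T}) :
  is_matroid M -> loopless M -> is_flat M F ->
  has_nonstd_rp_rcf_coloring (restrict M F) \/
  has_nonstd_rp_rcf_coloring (contract M F) ->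
  has_nonstd_rp_rcf_coloring M.
Proof.
move=> HM lM [sF fF].
have HR := restrict_matroid HM F.
have HC := contract_matroid HM F.
have lR : loopless (restrict M F).
  move=> e /= eF; rewrite sub1set eF /=; apply: lM; exact: (subsetP sF).
have lC : loopless (contract M F).
  move=> e /=; rewrite inE => /andP[eF eE].
  rewrite sub1set inE eF eE /= cards1.
  have h1 := fF e eE eF; have h2 := rank_unit HM F e.
  apply/eqP; lia.
have mR : mrank (restrict M F) = rank M F by rewrite /mrank /= rank_restrict setIid.
have mC : mrank (contract M F) = rank M (ground M) - rank M F.
  rewrite /mrank /= (rank_contract HM _ sF) setIid E1 (setUidPl sF) //.
have rFE : rank M F <= rank M (ground M) := rank_mono HM sF.
case=> [[P [cP rP rpP nP]] | [Q [cQ rQ rpQ nQ]]].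
- have [Q [cQ rQ rpQ]] := exists_coloring (leqnn _) HC lC.
  rewrite /rank_preserving mR in rpP; rewrite /rank_preserving mC in rpQ.
  exists (P :|: Q); split.
  + exact: U_coloring sF cP cQ.
  + exact: U_rcf HM sF cP cQ rP rQ.
  + rewrite /rank_preserving (U_card cP cQ) rpP rpQ /mrank; lia.
  + move/std_split => [s [us sU hcs]]; apply: nP.
    apply: (split_std (s := [seq X <- s | X \in P])).
    * exact: filter_uniq.
    * apply: filter_set sU _; exact: subsetUl.
    * exact (P_cutcond HM sF cP cQ us sU hcs rpP).
- have [P [cP rP rpP]] := exists_coloring (leqnn _) HR lR.
  rewrite /rank_preserving mR in rpP; rewrite /rank_preserving mC in rpQ.
  exists (P :|: Q); split.
  + exact: U_coloring sF cP cQ.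
  + exact: U_rcf HM sF cP cQ rP rQ.
  + rewrite /rank_preserving (U_card cP cQ) rpP rpQ /mrank; lia.
  + move/std_split => [s [us sU hcs]]; apply: nQ.
    apply: (split_std (s := [seq X <- s | X \in Q])).
    * exact: filter_uniq.
    * apply: filter_set sU _; exact: subsetUr.
    * exact (Q_cutcond HM sF cP cQ us sU hcs rpP rpQ).
Qed.
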